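(* Let $g \ge 9$ be an integer and let $\mathcal{S}_{4,g}$ be the set of numerical semigroups of multiplicity $4$ and genus $g$. Then $\#\mathcal{S}_{4,g} = -g + \frac{5}{2}\lfloor \frac{g}{4}\rfloor + \lfloor \frac{g}{2}\rfloor + \frac12\lfloor \frac{g+5}{6}\rfloor + g\lfloor \frac{g+5}{6}\rfloor - \lfloor \frac{g+5}{6}\rfloor\lfloor \frac{g}{2}\rfloor - \frac32\lfloor \frac{g+5}{6}\rfloor^2 - g\lfloor \frac{g}{4}\rfloor + \frac32\lfloor \frac{g}{4}\rfloor^2 + \lfloor \frac{g}{4}\rfloor\lfloor \frac{g}{2}\rfloor - \frac12\lfloor \frac{g+2}{6}\rfloor + \lfloor \frac{g+2}{6}\rfloor\lfloor \frac{g}{2}\rfloor - \frac32\lfloor \frac{g+2}{6}\rfloor^2 + \frac12\lfloor \frac{g+2}{4}\rfloor + \frac32\lfloor \frac{g+2}{4}\rfloor^2 - \lfloor \frac{g+2}{4}\rfloor\lfloor \frac{g}{2}\rfloor + \lfloor \frac{g+1}{2}\rfloor\lfloor \frac{g}{2}\rfloor - \lfloor \frac{g+1}{2}\rfloor\lceil \frac{2g-3}{8}\rceil + \lfloor \frac{g+1}{2}\rfloor - \lceil \frac{2g-7}{8}\rceil\lfloor \frac{g}{2}\rfloor + \lceil \frac{2g-7}{8}\rceil\lceil \frac{2g-3}{8}\rceil - \lceil \frac{2g-7}{8}\rceil$.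
   Context: A numerical semigroup is a subset $S \subseteq \mathbb{N}$ containing $0$, closed under addition, with $\mathbb{N}\setminus S$ finite. Its multiplicity is $\min(S\setminus\{0\})$ and its genus is $\#(\mathbb{N}\setminus S)$. *)

(* Defs.v *)
From mathcomp Require Import all_boot all_order all_algebra.
From Stdlib Require List.
Set Implicit Arguments. Unset Strict Implicit. Unset Printing Implicit Defensive.
Import Order.TTheory GRing.Theory Num.Theory.

Definition numerical_semigroup (S : pred nat) : Prop :=
  [/\ S 0, (forall a b, S a -> S b -> S (a + b)) &
      exists N, forall x, N <= x -> S x].

Definition has_multiplicity (S : pred nat) (m : nat) : Prop :=
  [/\ 0 < m, S m & forall x, 0 < x < m -> ~~ S x].

(* g = #(ℕ \ S): counted below any bound N beyond which all integers lie in S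
   (the count does not depend on the chosen bound). *)
Definition has_genus (S : pred nat) (g : nat) : Prop :=
  exists N, (forall x, N <= x -> S x) /\ count (predC S) (iota 0 N) = g.

Definition in_S (m g : nat) (S : pred nat) : Prop :=
  [/\ numerical_semigroup S, has_multiplicity S m & has_genus S g].

Definition card_is (X : pred nat -> Prop) (n : nat) : Prop :=
  exists L : list (pred nat),
    [/\ List.NoDup L, (forall S, List.In S L <-> X S) & List.length L = n].

Local Open Scope ring_scope.
Definition flr (x : rat) : rat := (Num.floor x)%:~R.
Definition cil (x : rat) : rat := (Num.ceil x)%:~R.

(* Main.v *)
Require Import Defs.
From mathcomp Require Import all_boot all_order all_algebra.
From mathcomp Require Import zify ring lra.
From Stdlib Require Import FunctionalExtensionality.
Import Order.TTheory GRing.Theory Num.Theory.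

Definition trip := (nat * nat * nat)%type.
Definition kk (t : trip) (r : nat) : nat :=
  match r with 1 => t.1.1 | 2 => t.1.2 | 3 => t.2 | _ => 0 end.
Definition sg (t : trip) : pred nat := fun n => kk t (n %% 4) <= n %/ 4.
Definition kunz (t : trip) : bool :=
  let: (x, y, z) := t in
  [&& 0 < x, 0 < y, 0 < z, y <= 2 * x, z <= x + y, y <= 2 * z + 1 & x <= y + z + 1].
Definition valid (g : nat) (t : trip) : bool :=
  kunz t && (t.1.1 + t.1.2 + t.2 == g).

Lemma mod4_cases n : n %% 4 = 0 \/ n %% 4 = 1 \/ n %% 4 = 2 \/ n %% 4 = 3.
Proof. lia. Qed.

Lemma sg_add t a b : kunz t -> sg t a -> sg t b -> sg t (a + b).
Proof.
case: t => [[x y] z] /= /and4P [h1 h2 h3 /and4P [h4 h5 h6 h7]]; rewrite /sg.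
rewrite -modnDm.
have [ea|[ea|[ea|ea]]] := mod4_cases a; have [eb|[eb|[eb|eb]]] := mod4_cases b;
  rewrite ea eb /=; lia.
Qed.

Lemma sgE t q r : r < 4 -> sg t (q * 4 + r) = (kk t r <= q).
Proof. by move=> hr; rewrite /sg modnMDl divnMDl // modn_small // divn_small // addn0. Qed.

Lemma count_sg4 t M :
  count (predC (sg t)) (iota 0 (4 * M)) = minn t.1.1 M + minn t.1.2 M + minn t.2 M.
Proof.
case: t => [[x y] z] /=.
elim: M => [|M IH]; first by rewrite !minn0.
rewrite mulnS addnC iotaD count_cat IH add0n.
have -> : iota (4 * M) 4 = [:: M*4 + 0; M*4 + 1; M*4 + 2; M*4 + 3].
  by rewrite /= mulnC !addnS !addn0.
rewrite /= !sgE //=.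
case: (leqP x M); case: (leqP y M); case: (leqP z M); move=> /= *; lia.
Qed.

Lemma genus_sg t N : (forall n, N <= n -> sg t n) ->
  count (predC (sg t)) (iota 0 N) = t.1.1 + t.1.2 + t.2.
Proof.
move=> hN; set M := N + t.1.1 + t.1.2 + t.2.
have hM : 4 * M = N + (4 * M - N) by lia.
have := count_sg4 t M; rewrite hM iotaD count_cat add0n.
have -> : count (predC (sg t)) (iota N (4 * M - N)) = 0.
  apply/eqP; rewrite -leqn0 leqNgt -has_count; apply/hasPn => n.
  by rewrite mem_iota /= => /andP [hn _]; rewrite hN.
rewrite addn0 => ->; rewrite /M; lia.
Qed.

Lemma valid_inS g t : valid g t -> in_S 4 g (sg t).
Proof.
case: t => [[x y] z] /andP [hk /eqP hg].
have hk' := hk; move: hk' => /and4P [h1 h2 h3 _].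
have hall : forall n, 4 * (x + y + z + 1) <= n -> sg (x, y, z) n.
  move=> n hn; rewrite /sg.
  have [e|[e|[e|e]]] := mod4_cases n; rewrite e /=; lia.
split.
- split; first by [].
  + by move=> a b; apply: sg_add.
  + by exists (4 * (x + y + z + 1)).
- split => //.
  move=> n /andP [n0 n4]; rewrite /sg.
  have [e|[e|[e|e]]] := mod4_cases n; rewrite e /=; lia.
- exists (4 * (x + y + z + 1)); split => //.
  by rewrite genus_sg.
Qed.

Lemma sg_inj t1 t2 : kunz t1 -> kunz t2 -> sg t1 = sg t2 -> t1 = t2.
Proof.
case: t1 => [[x1 y1] z1]; case: t2 => [[x2 y2] z2] _ _ E.
have F : forall q r, r < 4 -> (kk (x1,y1,z1) r <= q) = (kk (x2,y2,z2) r <= q).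
  by move=> q r hr; rewrite -!sgE // E.
have a := F x1 1 isT; have b := F x2 1 isT; have c := F y1 2 isT.
have d := F y2 2 isT; have e := F z1 3 isT; have f := F z2 3 isT.
rewrite /= leqnn in a b c d e f.
move/esym: a => a; move: b d f => b d f.
have h : x1 = x2 /\ y1 = y2 /\ z1 = z2 by lia.
by case: h => [-> [-> ->]].
Qed.

Lemma inS_sg g S : in_S 4 g S -> exists t, valid g t /\ S = sg t.
Proof.
case=> [[S0 Sadd [N SN]] [_ S4 Smul] [N' [SN' hg]]].
have Sup : forall a j, S a -> S (a + 4 * j).
  move=> a j Sa; elim: j => [|j IH]; first by rewrite muln0 addn0.
  by rewrite mulnS addnCA addnC; apply: Sadd.
have ex r : exists q, S (q * 4 + r).
  by exists N; apply: SN; lia.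
pose k r := ex_minn (ex r).
have kP r : S (k r * 4 + r) /\ forall q, S (q * 4 + r) -> k r <= q.
  by rewrite /k; case: ex_minnP.
pose t : trip := (k 1, k 2, k 3).
have E : forall n, S n = sg t n.
  move=> n; rewrite {1}(divn_eq n 4) /sg.
  have hr : n %% 4 < 4 by rewrite ltn_pmod.
  move: (n %% 4) hr (n %/ 4) => r hr q.
  have [->|[->|[->|->]]] : r = 0 \/ r = 1 \/ r = 2 \/ r = 3 by lia.
  - rewrite addn0 /= mulnC; apply/idP; have := Sup 0 q S0; by rewrite add0n.
  - rewrite /=; case: (kP 1) => h1 h2; apply/idP/idP; first exact: h2.
    move=> le; have := Sup _ (q - k 1) h1.
    by rewrite (_ : k 1 * 4 + 1 + 4 * (q - k 1) = q * 4 + 1) //; lia.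
  - rewrite /=; case: (kP 2) => h1 h2; apply/idP/idP; first exact: h2.
    move=> le; have := Sup _ (q - k 2) h1.
    by rewrite (_ : k 2 * 4 + 2 + 4 * (q - k 2) = q * 4 + 2) //; lia.
  - rewrite /=; case: (kP 3) => h1 h2; apply/idP/idP; first exact: h2.
    move=> le; have := Sup _ (q - k 3) h1.
    by rewrite (_ : k 3 * 4 + 3 + 4 * (q - k 3) = q * 4 + 3) //; lia.
have ES : S = sg t by apply: functional_extensionality => n; apply: E.
have ks : forall q r, r < 4 -> S (q * 4 + r) = (kk t r <= q).
  by move=> q r hr; rewrite E sgE.
exists t; split => //.
have p1 : 0 < k 1.
  rewrite lt0n; apply/negP => /eqP e; have := Smul 1 isT; rewrite (_ : 1 = 0 * 4 + 1) // ks // /= e //.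
have p2 : 0 < k 2.
  rewrite lt0n; apply/negP => /eqP e; have := Smul 2 isT; rewrite (_ : 2 = 0 * 4 + 2) // ks // /= e //.
have p3 : 0 < k 3.
  rewrite lt0n; apply/negP => /eqP e; have := Smul 3 isT; rewrite (_ : 3 = 0 * 4 + 3) // ks // /= e //.
have w1 : S (k 1 * 4 + 1) by rewrite ks //=.
have w2 : S (k 2 * 4 + 2) by rewrite ks //=.
have w3 : S (k 3 * 4 + 3) by rewrite ks //=.
have i1 := Sadd _ _ w1 w1; rewrite (_ : k 1 * 4 + 1 + (k 1 * 4 + 1) = (k 1 + k 1) * 4 + 2) in i1; last by lia.
have i2 := Sadd _ _ w1 w2; rewrite (_ : k 1 * 4 + 1 + (k 2 * 4 + 2) = (k 1 + k 2) * 4 + 3) in i2; last by lia.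
have i3 := Sadd _ _ w3 w3; rewrite (_ : k 3 * 4 + 3 + (k 3 * 4 + 3) = (k 3 + k 3 + 1) * 4 + 2) in i3; last by lia.
have i4 := Sadd _ _ w2 w3; rewrite (_ : k 2 * 4 + 2 + (k 3 * 4 + 3) = (k 2 + k 3 + 1) * 4 + 1) in i4; last by lia.
rewrite !ks //= in i1 i2 i3 i4.
have hg' : g = k 1 + k 2 + k 3.
  by rewrite -hg ES genus_sg // -ES.
rewrite /valid /= hg' eqxx andbT.
apply/and4P; split => //; apply/and4P; split => //; lia.
Qed.

Lemma count_itv lo hi n : count (fun x => lo <= x <= hi) (iota 0 n) = minn hi.+1 n - lo.
Proof.
elim: n => [|n IH]; first by rewrite minn0.
rewrite -addn1 iotaD count_cat IH /= addn0 add0n.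
case: (leqP lo n); case: (leqP n hi) => /= *; lia.
Qed.

Definition Fy (g y : nat) : nat := if y == 0 then 0 else minn y.+1 (g.+1 - 2 * y).

Lemma inner g y : 4 <= g -> y <= g ->
  count (fun x => valid g (x, y, g - x - y)) (iota 0 g.+1) = Fy g y.
Proof.
move=> g4 yg; rewrite /Fy.
case: eqP => [->|/eqP y0].
  apply/eqP; rewrite -leqn0 leqNgt -has_count; apply/hasPn => x _.
  by rewrite /valid /kunz /= andbF.
case: (leqP (3 * y) g) => hy.
- rewrite (@eq_in_count _ _ (fun x => ((g.+1)%/2 - y <= x <= (g.+1)%/2))).
    by rewrite count_itv; lia.
  move=> x; rewrite mem_iota /= => hx.
  rewrite /valid /kunz /=; lia.
- rewrite (@eq_in_count _ _ (fun x => ((y.+1)%/2 <= x <= (2 * g + 1 - 3 * y)%/2))).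
    by rewrite count_itv; lia.
  move=> x; rewrite mem_iota /= => hx.
  rewrite /valid /kunz /=; lia.
Qed.

Lemma sum1 n : 2 * sumn [seq (if y == 0 then 0 else y.+1) | y <- iota 0 n.+1] = n * (n + 3).
Proof.
elim: n => [|n IH]; first by [].
rewrite -[n.+2]addn1 iotaD map_cat sumn_cat /= mulnDr IH; nia.
Qed.

Lemma sum2 c a k : 2 * (a + k) <= c + 2 ->
  sumn [seq c - 2 * y | y <- iota a k] + k * (a + a + k - 1) = k * c.
Proof.
elim: k a => [|k IH] a h; first by [].
rewrite /=; have := IH a.+1; nia.
Qed.

Lemma sum0 (s : seq nat) f : (forall y, y \in s -> f y = 0) -> sumn (map f s) = 0.
Proof. by elim: s => //= y s IH h; rewrite h ?inE ?eqxx // IH // => z hz; apply: h; rewrite inE hz orbT. Qed.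

Lemma closed_form g : 4 <= g ->
  2 * sumn [seq Fy g y | y <- iota 0 g.+1] + 2 * (g %/ 2 - g %/ 3) * (g %/ 3 + g %/ 3 + 1 + (g %/ 2 - g %/ 3))
  = g %/ 3 * (g %/ 3 + 3) + 2 * (g %/ 2 - g %/ 3) * g.+1.
Proof.
move=> g4.
set m := g %/ 3; set M := g %/ 2.
have mM : m <= M by rewrite /m /M; lia.
have Mg : M <= g by rewrite /M; lia.
have -> : iota 0 g.+1 = iota 0 m.+1 ++ iota (0 + m.+1) (M - m) ++ iota (0 + m.+1 + (M - m)) (g - M).
  by rewrite -!iotaD; congr iota; lia.
rewrite !map_cat !sumn_cat.
rewrite (@sum0 (iota (0 + m.+1 + (M - m)) (g - M)) (Fy g)); last first.
  move=> y; rewrite mem_iota /Fy /M => hy; case: eqP => // _; lia.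
rewrite (@eq_in_map _ _ (Fy g) (fun y => if y == 0 then 0 else y.+1) (iota 0 m.+1)).1; last first.
  move=> y; rewrite mem_iota /Fy /m => hy; case: eqP => // _; lia.
rewrite (@eq_in_map _ _ (Fy g) (fun y => g.+1 - 2 * y) (iota (0 + m.+1) (M - m))).1; last first.
  move=> y; rewrite mem_iota /Fy /m /M => hy; case: eqP => [e|_]; lia.
have h1 := sum1 m.
have h2 := @sum2 g.+1 (0 + m.+1) (M - m) ltac:(rewrite /M /m; lia).
rewrite (_ : 0 + m.+1 + (0 + m.+1) + (M - m) - 1 = m + m + 1 + (M - m)) in h2; last by lia.
move: h1 h2; set k := M - m.
move: (sumn _) (sumn _) => A B h1 h2.
rewrite addn0; lia.
Qed.

Definition allt g : seq trip := [seq (x, y, g - x - y) | y <- iota 0 g.+1, x <- iota 0 g.+1].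
Definition Tg g := [seq t <- allt g | valid g t].

Lemma count_pairs (P : pred trip) (f : nat -> nat -> trip) (s t : seq nat) :
  count P [seq f y x | y <- s, x <- t] = sumn [seq count (fun x => P (f y x)) t | y <- s].
Proof. by elim: s => //= y s IH; rewrite count_cat count_map IH. Qed.

Lemma size_Tg g : 4 <= g -> size (Tg g) = sumn [seq Fy g y | y <- iota 0 g.+1].
Proof.
move=> g4; rewrite size_filter /allt count_pairs.
congr sumn; apply/eq_in_map => y; rewrite mem_iota /= => hy.
by apply: inner; lia.
Qed.

Lemma mem_allt g t : valid g t -> t \in allt g.
Proof.
case: t => [[x y] z] /andP [_ /= /eqP hg].
have -> : z = g - x - y by lia.
apply: (allpairs_f (fun y x => (x, y, g - x - y))); rewrite mem_iota; lia.
Qed.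

Lemma uniq_allt g : uniq (allt g).
Proof.
apply: allpairs_uniq; try exact: iota_uniq.
by move=> [y1 x1] [y2 x2] _ _ /= [-> ->].
Qed.

Lemma In_mem (s : seq trip) x : List.In x s <-> x \in s.
Proof.
elim: s => //= y s IH; rewrite inE; split.
- by case=> [->|/IH ->]; rewrite ?eqxx ?orbT.
- by case/orP => [/eqP ->|/IH]; [left|right].
Qed.

Lemma length_size (A : Type) (s : seq A) : List.length s = size s.
Proof. by elim: s => //= a s ->. Qed.

Lemma nodup_map (f : trip -> pred nat) (s : seq trip) :
  uniq s -> {in s &, injective f} -> List.NoDup (List.map f s).
Proof.
elim: s => [|a s IH] /=; first by constructor.
move=> /andP [na us] inj; constructor.
- move=> /List.in_map_iff [x [fx /In_mem xs]].
  have := inj x a; rewrite inE xs orbT inE eqxx => /(_ isT isT fx) e.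
  by move: na; rewrite -e xs.
- by apply: IH => // u v hu hv; apply: inj; rewrite ?inE ?hu ?hv ?orbT.
Qed.

Lemma card_main g : 4 <= g -> card_is (in_S 4 g) (sumn [seq Fy g y | y <- iota 0 g.+1]).
Proof.
move=> g4; exists (List.map sg (Tg g)); split.
- apply: nodup_map; first by apply: filter_uniq; apply: uniq_allt.
  move=> u v; rewrite !mem_filter => /andP [/andP [ku _] _] /andP [/andP [kv _] _].
  exact: sg_inj.
- move=> S; split.
  + move=> /List.in_map_iff [t [<- /In_mem]]; rewrite mem_filter => /andP [vt _].
    exact: valid_inS.
  + move=> /inS_sg [t [vt ->]]; apply: List.in_map; apply/In_mem.
    by rewrite mem_filter vt mem_allt.
- by rewrite List.length_map length_size size_Tg.
Qed.

Local Open Scope ring_scope.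

Lemma flr_nat (n d : nat) : (0 < d)%N ->
  Num.floor ((n%:R : rat) / d%:R) = (n %/ d)%:Z.
Proof.
move=> d0; apply: floor_def.
have dp : (0 : rat) < d%:R by rewrite ltr0n.
rewrite intrD !pmulrn -natrD.
rewrite ler_pdivlMr // ltr_pdivrMr // -!natrM ler_nat ltr_nat.
have := divn_eq n d; have := ltn_pmod n d0; move=> h1 h2; apply/andP; split; nia.
Qed.

Lemma cil_nat (n d : nat) : (0 < d)%N ->
  Num.ceil ((n%:R : rat) / d%:R) = ((n + d.-1) %/ d)%:Z.
Proof.
move=> d0; apply: ceil_def.
have dp : (0 : rat) < d%:R by rewrite ltr0n.
rewrite ltr_pdivlMr // ler_pdivrMr // -[d%:R]/((Posz d)%:~R) -[n%:R]/((Posz n)%:~R) -!intrM ltr_int ler_int.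
set q := ((n + d.-1) %/ d)%N.
have := divn_eq (n + d.-1)%N d; have := ltn_pmod (n + d.-1)%N d0. rewrite -/q.
move=> h1 h2; apply/andP; split; nia.
Qed.

Lemma final (g n : nat) (hg : (9 <= g)%N)
  (hc : (2 * n + 2 * (g %/ 2 - g %/ 3) * (g %/ 3 + g %/ 3 + 1 + (g %/ 2 - g %/ 3))
  = g %/ 3 * (g %/ 3 + 3) + 2 * (g %/ 2 - g %/ 3) * g.+1)%N) :
  let G : rat := g%:R in
  let a := flr (G / 4) in
  let b := flr (G / 2) in
  let c := flr ((G + 5) / 6) in
  let d := flr ((G + 2) / 6) in
  let e := flr ((G + 2) / 4) in
  let f := flr ((G + 1) / 2) in
  let h := cil ((2 * G - 3) / 8) in
  let k := cil ((2 * G - 7) / 8) in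
  n%:R = - G + 5/2 * a + b + 1/2 * c + G * c - c * b - 3/2 * c ^+ 2
         - G * a + 3/2 * a ^+ 2 + a * b - 1/2 * d + d * b - 3/2 * d ^+ 2
         + 1/2 * e + 3/2 * e ^+ 2 - e * b + f * b - f * h + f
         - k * b + k * h - k.
Proof.
rewrite /=.
have e5 : (g%:R + 5 : rat) = (g + 5)%N%:R by rewrite natrD.
have e2 : (g%:R + 2 : rat) = (g + 2)%N%:R by rewrite natrD.
have e1 : (g%:R + 1 : rat) = (g + 1)%N%:R by rewrite natrD.
have e3 : (2 * g%:R - 3 : rat) = (2 * g - 3)%N%:R by rewrite natrB ?natrM //; lia.
have e7 : (2 * g%:R - 7 : rat) = (2 * g - 7)%N%:R by rewrite natrB ?natrM //; lia.
rewrite /flr /cil e5 e2 e1 e3 e7 !flr_nat // !cil_nat // -!pmulrn /=.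
have [q [r [hgq hr]]] : exists q r, (g = 24 * q + r /\ r < 24)%N.
  by exists (g %/ 24)%N, (g %% 24)%N; split; lia.
have d1 : (g %/ 4 = 6 * q + r %/ 4)%N by lia.
have d2 : (g %/ 2 = 12 * q + r %/ 2)%N by lia.
have d3 : ((g + 5) %/ 6 = 4 * q + (r + 5) %/ 6)%N by lia.
have d4 : ((g + 2) %/ 6 = 4 * q + (r + 2) %/ 6)%N by lia.
have d5 : ((g + 2) %/ 4 = 6 * q + (r + 2) %/ 4)%N by lia.
have d6 : ((g + 1) %/ 2 = 12 * q + (r + 1) %/ 2)%N by lia.
have d7 : ((2 * g - 3 + 7) %/ 8 = 6 * q + (2 * r + 4) %/ 8)%N by lia.
have d8 : ((2 * g - 7 + 7) %/ 8 = 6 * q + (2 * r) %/ 8)%N by lia.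
have d9 : (g %/ 3 = 8 * q + r %/ 3)%N by lia.
have d10 : (g %/ 2 - g %/ 3 = 4 * q + (r %/ 2 - r %/ 3))%N by lia.
rewrite d10 d9 in hc; rewrite hgq in hc.
have hc' := congr1 (fun x : nat => x%:R : rat) hc; cbv beta in hc'.
move: hc'; rewrite !natrD ?natrM ?natrD => hc'.
rewrite d1 d2 d3 d4 d5 d6 d7 d8 hgq !natrD ?natrM ?natrD.
clear -hc' hr.
remember (r %/ 4)%N as c1 eqn:E1.
remember (r %/ 2)%N as c2 eqn:E2.
remember ((r + 5) %/ 6)%N as c3 eqn:E3.
remember ((r + 2) %/ 6)%N as c4 eqn:E4.
remember ((r + 2) %/ 4)%N as c5 eqn:E5.
remember ((r + 1) %/ 2)%N as c6 eqn:E6.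
remember ((2 * r + 4) %/ 8)%N as c7 eqn:E7.
remember ((2 * r) %/ 8)%N as c8 eqn:E8.
remember (r %/ 3)%N as c9 eqn:E9.
remember (c2 - c9)%N as c10 eqn:E10.
do 24 (case: r hr E1 E2 E3 E4 E5 E6 E7 E8 E9 hc' => [|r] hr E1 E2 E3 E4 E5 E6 E7 E8 E9 hc';
  [ cbv in E1, E2, E3, E4, E5, E6, E7, E8, E9; subst c1 c2 c3 c4 c5 c6 c7 c8 c9;
    cbv in E10; subst c10; lra | idtac ]).
lia.
Qed.

Theorem mainTheorem8 (g : nat) (hg : (9 <= g)%N) :
  exists n : nat, card_is (in_S 4 g) n /\
  let G : rat := g%:R in
  let a := flr (G / 4) in
  let b := flr (G / 2) in
  let c := flr ((G + 5) / 6) in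
  let d := flr ((G + 2) / 6) in
  let e := flr ((G + 2) / 4) in
  let f := flr ((G + 1) / 2) in
  let h := cil ((2 * G - 3) / 8) in
  let k := cil ((2 * G - 7) / 8) in
  n%:R = - G + 5/2 * a + b + 1/2 * c + G * c - c * b - 3/2 * c ^+ 2
         - G * a + 3/2 * a ^+ 2 + a * b - 1/2 * d + d * b - 3/2 * d ^+ 2
         + 1/2 * e + 3/2 * e ^+ 2 - e * b + f * b - f * h + f
         - k * b + k * h - k.
Proof.
exists (sumn [seq Fy g y | y <- iota 0 g.+1]); split.
  by apply: card_main; lia.
by apply: final => //; apply: closed_form; lia.
Qed.
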